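(* Let $\Phi$ be a universal Horn sentence over a finite relational signature $\tau$. Then the following are equivalent: (1) $\mathrm{Mod}(\Phi)$ has the joint embedding property; (2) for all conjunctions of atomic $\tau$-formulas $\phi_1(\bar x_1)$ and $\phi_2(\bar x_2)$ with disjoint sets of variables such that $\Phi\wedge\phi_i(\bar x_i)$ is satisfiable for both $i\in\{1,2\}$, we have $\phi_1(\bar x_1)\wedge\phi_2(\bar x_2)\leq_\Phi \phi_1(\bar x_1)$.
   Context: Formulas are first-order over $\tau$ and do not use equality atoms. A universal sentence is Horn if its quantifier-free part is a conjunction of Horn clauses (disjunctions of atomic and negated atomic formulas with at most one positive disjunct). $\mathrm{Mod}(\Phi)$ is the class of all finite models of $\Phi$. A class $\mathcal{C}$ of $\tau$-structures has the joint embedding property if for all $\mathfrak{B}_1,\mathfrak{B}_2\in\mathcal{C}$ there is $\mathfrak{C}\in\mathcal{C}$ with embeddings $\mathfrak{B}_i\hookrightarrow\mathfrak{C}$, $i=1,2$. ''$\Phi\wedge\phi(\bar x)$ is satisfiable'' means some $\tau$-structure satisfies $\Phi$ together with $\phi$ under some assignment of the variables $\bar x$. For conjunctions of atomic $\tau$-formulas $\phi(\bar x)$ and $\psi(\bar x,\bar y)$, write $\psi(\bar x,\bar y)\leq_\Phi\phi(\bar x)$ if for every $\chi$ that is either $\bot$ or an atomic $\tau$-formula with free variables among $\bar x$: whenever $\Phi\models\forall\bar x,\bar y\,(\psi(\bar x,\bar y)\Rightarrow\chi(\bar x))$, also $\Phi\models\forall\bar x\,(\phi(\bar x)\Rightarrow\chi(\bar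 x))$. *)

(* Defs.v *)
From Stdlib Require Import List.
From mathcomp Require Import all_boot.
Set Implicit Arguments.
Unset Strict Implicit.
Unset Printing Implicit Defensive.

Section FO.
Variables (Sym : finType) (ar : Sym -> nat).

(* atomic formula R(x_1,...,x_{ar R}) (no equality atoms) *)
Record atom := Atom { asym : Sym; aargs : (ar asym).-tuple nat }.

(* Horn clause: (not a_1) \/ ... \/ (not a_k) \/ [optional positive atom] *)
Record hclause := HClause { hneg : seq atom; hpos : option atom }.

(* universal Horn sentence: universal closure of a conjunction of Horn clauses *)
Definition horn_sentence := seq hclause.

Record structure := Struct {
  carrier :> Type;
  rel : forall R : Sym, (ar R).-tuple carrier -> Prop }.

Definition holds (A : structure) (v : nat -> A) (a : atom) : Prop :=
  @rel A (asym a) (map_tuple v (aargs a)).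

Definition holds_conj (A : structure) (v : nat -> A) (phi : seq atom) : Prop :=
  forall a, In a phi -> holds v a.

Definition holds_opt (A : structure) (v : nat -> A) (chi : option atom) : Prop :=
  match chi with Some a => holds v a | None => False end.

Definition sat_clause (A : structure) (v : nat -> A) (c : hclause) : Prop :=
  holds_conj v (hneg c) -> holds_opt v (hpos c).

(* A |= Phi (first-order structures have nonempty domains) *)
Definition models (A : structure) (Phi : horn_sentence) : Prop :=
  inhabited A /\ forall (v : nat -> A) c, In c Phi -> sat_clause v c.

Definition finite_struct (A : structure) : Prop :=
  exists l : list A, forall x : A, In x l.

Definition embedding (A B : structure) (f : A -> B) : Prop :=
  injective f /\
  forall (R : Sym) (t : (ar R).-tuple A), @rel A R t <-> @rel B R (map_tuple f t).

Definition Mod_JEP (Phi : horn_sentence) : Prop :=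
  forall B1 B2 : structure,
    models B1 Phi -> finite_struct B1 -> models B2 Phi -> finite_struct B2 ->
    exists C : structure, models C Phi /\ finite_struct C /\
      (exists f : B1 -> C, embedding f) /\ (exists g : B2 -> C, embedding g).

Definition satisfiable (Phi : horn_sentence) (phi : seq atom) : Prop :=
  exists A : structure, models A Phi /\ exists v : nat -> A, holds_conj v phi.

Definition entails (Phi : horn_sentence) (psi : seq atom) (chi : option atom) : Prop :=
  forall A : structure, models A Phi -> forall v : nat -> A,
    holds_conj v psi -> holds_opt v chi.

Definition atom_vars_among (a : atom) (xs : seq nat) : Prop :=
  forall x, x \in tval (aargs a) -> x \in xs.

Definition conj_vars_among (phi : seq atom) (xs : seq nat) : Prop :=
  forall a, In a phi -> atom_vars_among a xs.

Definition opt_vars_among (chi : option atom) (xs : seq nat) : Prop :=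
  match chi with Some a => atom_vars_among a xs | None => True end.

Definition leq_Phi (Phi : horn_sentence) (psi phi : seq atom) (xs : seq nat) : Prop :=
  forall chi : option atom, opt_vars_among chi xs ->
    entails Phi psi chi -> entails Phi phi chi.

End FO.

(* Main.v *)
Require Import Defs.
From mathcomp Require Import all_boot.
From Stdlib Require List ClassicalEpsilon.

Set Implicit Arguments.
Unset Strict Implicit.
Section Aux.
Context {Sym : finType} {ar : Sym -> nat}.

Lemma In_of_mem (T : eqType) (s : seq T) (x : T) : x \in s -> List.In x s.
Proof.
elim: s => //= y s IH; rewrite in_cons => /orP [/eqP ->|/IH]; auto.
Qed.

Lemma In_cat (T : Type) (p q : seq T) (x : T) :
  List.In x (p ++ q) <-> List.In x p \/ List.In x q.
Proof.
elim: p => /= [|y p IH]; first by tauto.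
rewrite IH; tauto.
Qed.

Lemma mtc (A B C : Type) n (f : B -> C) (g : A -> B) (t : n.-tuple A) :
  map_tuple f (map_tuple g t) = map_tuple (f \o g) t.
Proof. by apply: val_inj => /=; rewrite map_comp. Qed.

Lemma holds_ext (A : structure ar) (v w : nat -> A) (a : atom ar) :
  (forall x, x \in tval (aargs a) -> v x = w x) -> holds v a <-> holds w a.
Proof.
move=> H; rewrite /holds.
have -> : map_tuple v (aargs a) = map_tuple w (aargs a); last by [].
by apply: val_inj => /=; apply/eq_in_map.
Qed.

Lemma holds_conj_app (A : structure ar) (v : nat -> A) p q :
  holds_conj v (p ++ q) <-> holds_conj v p /\ holds_conj v q.
Proof.
rewrite /holds_conj; split.
  by move=> H; split=> a Ha; apply: H; apply/In_cat; auto.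
by case=> H1 H2 a /In_cat [] ?; auto.
Qed.

Lemma entails_swap (Phi : horn_sentence ar) p q chi :
  entails Phi (p ++ q) chi -> entails Phi (q ++ p) chi.
Proof.
move=> H A mA v /holds_conj_app [H1 H2]; apply: H => //.
by apply/holds_conj_app.
Qed.

Definition emb (xs : seq nat) (x : nat) : option (seq_sub xs) := insub x.

Definition ext (A : Type) (v : nat -> A) {xs : seq nat} (d : option (seq_sub xs)) : A :=
  match d with Some y => v (val y) | None => v 0 end.

Lemma extE A (v : nat -> A) xs x : x \in xs -> ext v (emb xs x) = v x.
Proof.
move=> H; rewrite /emb; case: insubP => [u _ <- //|]; by rewrite /= H.
Qed.

Definition canon (Phi : horn_sentence ar) (phi : seq (atom ar)) (xs : seq nat) :
  structure ar :=
  @Struct Sym ar (option (seq_sub xs))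
    (fun R t => forall A : structure ar, models A Phi ->
       forall w : option (seq_sub xs) -> A, holds_conj (w \o emb xs) phi ->
       Defs.rel (map_tuple w t)).

Lemma ext_conj (A : structure ar) (v : nat -> A) xs phi :
  conj_vars_among phi xs -> holds_conj v phi -> holds_conj (ext v \o emb xs) phi.
Proof.
move=> V H a Ha; apply/(holds_ext (w := v)); last exact: H.
by move=> x Hx /=; rewrite extE //; apply: (V a Ha).
Qed.

Lemma canon_models Phi phi xs :
  satisfiable Phi phi -> conj_vars_among phi xs -> models (canon Phi phi xs) Phi.
Proof.
move=> [A0 [mA0 [v0 Hv0]]] V; split; first exact: (inhabits None).
move=> u c Hc Hneg.
have Hn : forall A, models A Phi -> forall w : option (seq_sub xs) -> A,
    holds_conj (w \o emb xs) phi -> holds_conj (w \o u) (hneg c).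
  move=> A mA w Hw a Ha; have := Hneg a Ha A mA w Hw.
  by rewrite /holds mtc.
rewrite /sat_clause /holds_opt; case E: (hpos c) => [p|].
  move=> A mA w Hw; rewrite mtc.
  have := (mA.2 (w \o u) c Hc (Hn A mA w Hw)); by rewrite E.
have := (mA0.2 (ext v0 \o u) c Hc (Hn A0 mA0 (ext v0) (ext_conj V Hv0))).
by rewrite E.
Qed.

Lemma canon_fin Phi phi xs : finite_struct (canon Phi phi xs).
Proof.
exists (enum {: option (seq_sub xs)}) => x; apply: In_of_mem.
by rewrite mem_enum.
Qed.

Definition pb (P : Prop) : bool :=
  if ClassicalEpsilon.excluded_middle_informative P then true else false.

Lemma pbP (P : Prop) : pb P = true <-> P.
Proof.
rewrite /pb; case: ClassicalEpsilon.excluded_middle_informative => //.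
Qed.

Definition mk (n off : nat) (R : Sym) (s : (ar R).-tuple 'I_n) : atom ar :=
  @Atom Sym ar R (map_tuple (fun i : 'I_n => off + val i) s).

Definition diag (B : structure ar) (n off : nat) (v : nat -> B) : seq (atom ar) :=
  List.flat_map (fun R => List.map (@mk n off R)
     (List.filter (fun s => pb (holds v (@mk n off R s))) (enum {: (ar R).-tuple 'I_n})))
     (enum Sym).

Lemma diag_In1 B n off v a : List.In a (@diag B n off v) ->
  exists R s, a = @mk n off R s /\ holds v a.
Proof.
move=> /List.in_flat_map [R [_ /List.in_map_iff [s [<- /List.filter_In [_ /pbP H]]]]].
by exists R, s.
Qed.

Lemma diag_In2 B n off v R s : holds v (@mk n off R s) -> List.In (@mk n off R s) (@diag B n off v).
Proof.
move=> H; apply/List.in_flat_map; exists R; split.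
  by apply: In_of_mem; rewrite mem_enum.
apply/List.in_map_iff; exists s; split => //.
apply/List.filter_In; split; last by apply/pbP.
by apply: In_of_mem; rewrite mem_enum.
Qed.

Lemma mk_vars n off R s : atom_vars_among (@mk n off R s) (iota off n).
Proof.
move=> x /= /mapP [i _ ->]; rewrite mem_iota leq_addr /=.
by rewrite ltn_add2l ltn_ord.
Qed.

Lemma diag_vars B n off v : conj_vars_among (@diag B n off v) (iota off n).
Proof. by move=> a /diag_In1 [R [s [-> _]]]; apply: mk_vars. Qed.

Lemma diag_holds B n off v : holds_conj v (@diag B n off v).
Proof. by move=> a /diag_In1 [R [s [_ H]]]. Qed.

Lemma diag_atom (B : structure ar) n off (v : nat -> B) (ix : B -> 'I_n)
  (Hv : forall x, v (off + val (ix x)) = x) R (t : (ar R).-tuple B) :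
  holds v (@mk n off R (map_tuple ix t)) <-> Defs.rel t.
Proof.
rewrite /holds /mk /=.
have -> : map_tuple v (map_tuple (fun i : 'I_n => off + val i) (map_tuple ix t)) = t;
  last by [].
apply: val_inj => /=; rewrite -!map_comp.
rewrite (eq_map (g := id)) ?map_id // => x /=; exact: Hv.
Qed.

End Aux.
Arguments mk {Sym} ar n off {R} s.
Unset Implicit Arguments.
Set Strict Implicit.

Theorem lemma1 (Sym : finType) (ar : Sym -> nat) (Phi : horn_sentence ar) :
  Mod_JEP Phi <->
  (forall (x1 x2 : seq nat) (phi1 phi2 : seq (atom ar)),
      conj_vars_among phi1 x1 -> conj_vars_among phi2 x2 ->
      (forall x, x \in x1 -> x \notin x2) ->
      satisfiable Phi phi1 -> satisfiable Phi phi2 ->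
      leq_Phi Phi (phi1 ++ phi2) phi1 x1).
Proof.
split.
- move=> JEP x1 x2 phi1 phi2 V1 V2 Dis S1 S2 chi Vchi Ent A mA v Hv.
  have [C [mC [_ [[f [_ Hf]] [g [_ Hg]]]]]] :=
    JEP _ _ (canon_models S1 V1) (canon_fin Phi phi1 x1)
            (canon_models S2 V2) (canon_fin Phi phi2 x2).
  pose u := fun x => if x \in x1 then f (emb x1 x) else g (emb x2 x).
  have Hu : holds_conj u (phi1 ++ phi2).
    apply/holds_conj_app; split => a Ha.
    + apply/(holds_ext (w := f \o emb x1)).
        by move=> x Hx; rewrite /u (V1 a Ha x Hx).
      rewrite /holds -mtc; apply/Hf => B mB w Hw; rewrite mtc; exact: Hw.
    + apply/(holds_ext (w := g \o emb x2)).
        move=> x Hx; rewrite /u; case: ifP => // H.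
        by move: (Dis x H); rewrite (V2 a Ha x Hx).
      rewrite /holds -mtc; apply/Hg => B mB w Hw; rewrite mtc; exact: Hw.
  have := Ent C mC u Hu; case: chi Vchi {Ent} => [a|] //= Va Hc.
  have Hc' : holds (f \o emb x1) a.
    apply/(holds_ext (w := u)) => // x Hx; by rewrite /u (Va x Hx).
  move: Hc'; rewrite /holds -mtc => /Hf H.
  have := H A mA (ext v) (ext_conj V1 Hv); rewrite mtc.
  move=> H'; apply/(holds_ext (w := ext v \o emb x1)) => //.
  by move=> x Hx /=; rewrite extE // Va.
- move=> H2 B1 B2 mB1 [l1 Hl1] mB2 [l2 Hl2].
  case: (mB1) => [[d1] _]; case: (mB2) => [[d2] _].
  pose n1 := length l1; pose n2 := length l2.
  have [o1 Ho1] : exists f : B1 -> 'I_n1, forall x, List.nth (val (f x)) l1 d1 = x.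
    have H : forall x, {i : 'I_n1 | List.nth (val i) l1 d1 = x}.
      move=> x; apply: ClassicalEpsilon.constructive_indefinite_description.
      have [i [/ltP Hi Ei]] := List.In_nth l1 x d1 (Hl1 x).
      by exists (Ordinal Hi).
    by exists (fun x => proj1_sig (H x)) => x; case: (H x).
  have [o2 Ho2] : exists f : B2 -> 'I_n2, forall x, List.nth (val (f x)) l2 d2 = x.
    have H : forall x, {i : 'I_n2 | List.nth (val i) l2 d2 = x}.
      move=> x; apply: ClassicalEpsilon.constructive_indefinite_description.
      have [i [/ltP Hi Ei]] := List.In_nth l2 x d2 (Hl2 x).
      by exists (Ordinal Hi).
    by exists (fun x => proj1_sig (H x)) => x; case: (H x).
  pose v1 := fun k => List.nth k l1 d1.
  pose v2 := fun k => List.nth (k - n1) l2 d2.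
  have Hv1 : forall x, v1 (0 + val (o1 x)) = x by move=> x; rewrite add0n /v1.
  have Hv2 : forall x, v2 (n1 + val (o2 x)) = x by move=> x; rewrite /v2 addKn.
  pose phi1 := diag n1 0 v1.
  pose phi2 := diag n2 n1 v2.
  have S1 : satisfiable Phi phi1 by exists B1; split => //; exists v1; apply: diag_holds.
  have S2 : satisfiable Phi phi2 by exists B2; split => //; exists v2; apply: diag_holds.
  have Dis12 : forall x, x \in iota 0 n1 -> x \notin iota n1 n2.
    move=> x; rewrite !mem_iota /= add0n => Hx; rewrite negb_and -ltnNge Hx //.
  have Dis21 : forall x, x \in iota n1 n2 -> x \notin iota 0 n1.
    move=> x Hx; apply/negP => Hx'; by move: (Dis12 x Hx'); rewrite Hx.
  have L1 := H2 _ _ phi1 phi2 (@diag_vars _ _ _ _ _ _) (@diag_vars _ _ _ _ _ _) Dis12 S1 S2.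
  have L2 := H2 _ _ phi2 phi1 (@diag_vars _ _ _ _ _ _) (@diag_vars _ _ _ _ _ _) Dis21 S2 S1.
  pose idx := fun z : B1 + B2 => match z with
                | inl x => 0 + val (o1 x) | inr y => n1 + val (o2 y) end.
  pose C := @Struct Sym ar (B1 + B2)%type
    (fun R t => entails Phi (phi1 ++ phi2) (Some (@Atom Sym ar R (map_tuple idx t)))).
  have E1 : forall R (t : (ar R).-tuple B1),
      @Atom Sym ar R (map_tuple idx (map_tuple inl t)) = mk ar n1 0 (map_tuple o1 t).
    move=> R t; rewrite /mk; f_equal; apply: val_inj => /=.
    by rewrite -!map_comp; apply: eq_map.
  have E2 : forall R (t : (ar R).-tuple B2),
      @Atom Sym ar R (map_tuple idx (map_tuple inr t)) = mk ar n2 n1 (map_tuple o2 t).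
    move=> R t; rewrite /mk; f_equal; apply: val_inj => /=.
    by rewrite -!map_comp; apply: eq_map.
  exists C; split; [|split; [|split]].
  + split; first exact: (inhabits (inl d1)).
    move=> u c Hc Hneg.
    have Hn : forall A, models A Phi -> forall w : nat -> A,
        holds_conj w (phi1 ++ phi2) -> holds_conj (w \o (idx \o u)) (hneg c).
      move=> A mA w Hw a Ha; have := Hneg a Ha A mA w Hw.
      by rewrite /holds /= /holds /= !mtc.
    rewrite /sat_clause /holds_opt; case E: (hpos c) => [p|].
      move=> A mA w Hw; rewrite /holds /= /holds /= !mtc.
      have := (mA.2 _ c Hc (Hn A mA w Hw)); by rewrite E.
    have Ent : entails Phi (phi1 ++ phi2) None.
      move=> A mA w Hw; have := (mA.2 _ c Hc (Hn A mA w Hw)); by rewrite E.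
    exact: (L1 None I Ent B1 mB1 v1 (@diag_holds _ _ _ _ _ _)).
  + exists (List.map inl l1 ++ List.map inr l2) => z.
    apply/In_cat; case: z => [x|y]; [left|right]; apply: List.in_map; auto.
  + exists inl; split; first by move=> x y [].
    move=> R t; rewrite /= E1; split.
    * move=> Hr A mA w /holds_conj_app [Hw _]; apply: Hw; apply: diag_In2.
      by apply/(diag_atom Hv1).
    * move=> He; apply/(diag_atom Hv1).
      exact: (L1 (Some _) (@mk_vars _ _ _ _ _ _) He B1 mB1 v1 (@diag_holds _ _ _ _ _ _)).
  + exists inr; split; first by move=> x y [].
    move=> R t; rewrite /= E2; split.
    * move=> Hr A mA w /holds_conj_app [_ Hw]; apply: Hw; apply: diag_In2.
      by apply/(diag_atom Hv2).
    * move=> He; apply/(diag_atom Hv2).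
      exact: (L2 (Some _) (@mk_vars _ _ _ _ _ _) (entails_swap He) B2 mB2 v2 (@diag_holds _ _ _ _ _ _)).
Qed.
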